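(* Let $\mathscr{G}$ be a principal homogeneous groupoid with vertex set $\Lambda$ (exactly one arrow $[a,b]$ from $a$ to $b$ for all $a,b\in\Lambda$), endowed with a pre-braiding $\sigma$, and let $\langle\cdot,\cdot,\cdot\rangle$ be the ternary operation on $\Lambda$ defined by $\sigma([a,b]|[b,c])=[a,\langle a,b,c\rangle]|[\langle a,b,c\rangle,c]$. Then: (i) for all $a,b$, the map $\langle a,b,\cdot\rangle\colon\Lambda\to\Lambda$ is invertible with inverse $\langle b,a,\cdot\rangle$; (ii) for all $b,c$, the map $\langle\cdot,b,c\rangle$ is invertible with inverse $\langle\cdot,c,b\rangle$; (iii) if moreover $\sigma$ is involutive, then $\langle\cdot,b,c\rangle$ also has inverse $\langle b,c,\cdot\rangle$, and hence $\langle c,b,\cdot\rangle=\langle\cdot,b,c\rangle$.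
   Context: For a groupoid $\mathscr{G}$ with vertices $\Lambda$, multiplication $m$ on composable pairs and units $\mathbf{1}_\lambda$, a pre-braiding is a source/target-preserving map $\sigma(x,y)=(x\rightharpoonup y,x\leftharpoonup y)$ on composable pairs such that for all composable $x|y|z$: $\sigma(x,\mathbf{1}_{\mathfrak{t}(x)})=(\mathbf{1}_{\mathfrak{s}(x)},x)$; $\sigma(\mathbf{1}_{\mathfrak{s}(x)},x)=(x,\mathbf{1}_{\mathfrak{t}(x)})$; $x\rightharpoonup yz=(x\rightharpoonup y)((x\leftharpoonup y)\rightharpoonup z)$ and $x\leftharpoonup yz=(x\leftharpoonup y)\leftharpoonup z$; $xy\leftharpoonup z=(x\leftharpoonup(y\rightharpoonup z))(y\leftharpoonup z)$ and $xy\rightharpoonup z=x\rightharpoonup(y\rightharpoonup z)$; $m\circ\sigma=m$. Involutive means $\sigma^2=\mathrm{id}$. In a PH groupoid, $[a,b][b,c]=[a,c]$. *)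

(* Defs.v *)
Set Implicit Arguments.

(* The principal homogeneous (PH) groupoid on a vertex set L:
   exactly one arrow [a,b] from a to b, represented as the pair (a,b). *)
Definition arr (L : Type) : Type := (L * L)%type.
Definition arrow {L : Type} (a b : L) : arr L := (a, b).
Definition src {L : Type} (x : arr L) : L := fst x.
Definition tgt {L : Type} (x : arr L) : L := snd x.
Definition unit_arr {L : Type} (l : L) : arr L := (l, l).
(* multiplication (meaningful on composable pairs x|y, i.e. tgt x = src y):
   [a,b][b,c] = [a,c] *)
Definition mul {L : Type} (x y : arr L) : arr L := (src x, tgt y).
Definition composable {L : Type} (x y : arr L) : Prop := tgt x = src y.

(* A map on composable pairs, given as a total function whose behaviour only
   matters on composable pairs. *)
Definition lact {L : Type} (sigma : arr L -> arr L -> arr L * arr L)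
  (x y : arr L) : arr L := fst (sigma x y).
Definition ract {L : Type} (sigma : arr L -> arr L -> arr L * arr L)
  (x y : arr L) : arr L := snd (sigma x y).

Definition pre_braiding {L : Type} (sigma : arr L -> arr L -> arr L * arr L) : Prop :=
  (forall x y, composable x y ->
      composable (lact sigma x y) (ract sigma x y)
      /\ src (lact sigma x y) = src x
      /\ tgt (ract sigma x y) = tgt y)
  /\ (forall x, sigma x (unit_arr (tgt x)) = (unit_arr (src x), x))
  /\ (forall x, sigma (unit_arr (src x)) x = (x, unit_arr (tgt x)))
  /\ (forall x y z, composable x y -> composable y z ->
        lact sigma x (mul y z)
          = mul (lact sigma x y) (lact sigma (ract sigma x y) z)
        /\ ract sigma x (mul y z) = ract sigma (ract sigma x y) z)
  /\ (forall x y z, composable x y -> composable y z ->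
        ract sigma (mul x y) z
          = mul (ract sigma x (lact sigma y z)) (ract sigma y z)
        /\ lact sigma (mul x y) z = lact sigma x (lact sigma y z))
  /\ (forall x y, composable x y ->
        mul (lact sigma x y) (ract sigma x y) = mul x y).

Definition involutive {L : Type} (sigma : arr L -> arr L -> arr L * arr L) : Prop :=
  forall x y, composable x y ->
    sigma (lact sigma x y) (ract sigma x y) = (x, y).

Definition tern {L : Type} (sigma : arr L -> arr L -> arr L * arr L)
  (a b c : L) : L := tgt (lact sigma (arrow a b) (arrow b c)).

(* Main.v *)
Require Import Defs.

Lemma key (L : Type) (sigma : arr L -> arr L -> arr L * arr L) :
  pre_braiding sigma -> forall a b c : L,
  sigma (a,b) (b,c) = ((a, tern sigma a b c), (tern sigma a b c, c)).
Proof.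
  intros [H1 _] a b c.
  destruct (H1 (a,b) (b,c) eq_refl) as [Hc [Hs Ht]].
  unfold tern, arrow, lact, ract, composable, src, tgt in *; simpl in *.
  destruct (sigma (a,b) (b,c)) as [[p q] [r s]]; simpl in *; subst; reflexivity.
Qed.

Lemma part1 (L : Type) (sigma : arr L -> arr L -> arr L * arr L) :
  pre_braiding sigma -> forall a b c, tern sigma b a (tern sigma a b c) = c.
Proof.
  intros HP a b c. pose proof (@key L sigma HP) as K.
  destruct HP as [_ [_ [H3 [_ [H5 _]]]]].
  destruct (H5 (b,a) (a,b) (b,c) eq_refl eq_refl) as [_ E].
  unfold lact, mul, src, tgt in E; simpl in E.
  change (b,b) with (unit_arr (src (b,c))) in E; rewrite (H3 (b,c)) in E. unfold unit_arr, src, tgt in E; simpl in E.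
  rewrite K in E; simpl in E. rewrite K in E; simpl in E.
  injection E; intros; symmetry; assumption.
Qed.

Lemma part2 (L : Type) (sigma : arr L -> arr L -> arr L * arr L) :
  pre_braiding sigma -> forall a b c, tern sigma (tern sigma a b c) c b = a.
Proof.
  intros HP a b c. pose proof (@key L sigma HP) as K.
  destruct HP as [_ [H2 [_ [H4 _]]]].
  destruct (H4 (a,b) (b,c) (c,b) eq_refl eq_refl) as [_ E].
  unfold ract, mul, src, tgt in E; simpl in E.
  change (b,b) with (unit_arr (tgt (a,b))) in E; rewrite (H2 (a,b)) in E. unfold unit_arr, src, tgt in E; simpl in E.
  rewrite K in E; simpl in E. rewrite K in E; simpl in E.
  injection E; intros; symmetry; assumption.
Qed.

Lemma part3 (L : Type) (sigma : arr L -> arr L -> arr L * arr L) :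
  pre_braiding sigma -> involutive sigma ->
  forall a b c, tern sigma a (tern sigma a b c) c = b.
Proof.
  intros HP HI a b c. pose proof (@key L sigma HP) as K.
  pose proof (HI (a,b) (b,c) eq_refl) as E.
  unfold lact, ract in E. rewrite K in E; simpl in E. rewrite K in E.
  injection E; intros; assumption.
Qed.

Theorem lemma7p11 (L : Type) (sigma : arr L -> arr L -> arr L * arr L) :
  pre_braiding sigma ->
  (* (i) <a,b,.> is invertible with inverse <b,a,.> *)
  (forall a b : L,
     (forall c, tern sigma b a (tern sigma a b c) = c) /\
     (forall c, tern sigma a b (tern sigma b a c) = c)) /\
  (* (ii) <.,b,c> is invertible with inverse <.,c,b> *)
  (forall b c : L,
     (forall a, tern sigma (tern sigma a b c) c b = a) /\
     (forall a, tern sigma (tern sigma a c b) b c = a)) /\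
  (* (iii) if sigma is involutive, <.,b,c> has inverse <b,c,.>,
     hence <c,b,.> = <.,b,c> *)
  (involutive sigma ->
     forall b c : L,
       (forall a, tern sigma b c (tern sigma a b c) = a) /\
       (forall a, tern sigma (tern sigma b c a) b c = a) /\
       (forall a, tern sigma c b a = tern sigma a b c)).
Proof.
  intros HP.
  pose proof (@part1 L sigma HP) as P1. pose proof (@part2 L sigma HP) as P2.
  split; [intros; split; intros; apply P1|].
  split; [intros; split; intros; apply P2|].
  intros HI b c.
  assert (A : forall a, tern sigma b c (tern sigma a b c) = a).
  { intros a. pose proof (@part3 L sigma HP HI a b c) as E.
    pose proof (P2 a (tern sigma a b c) c) as F. rewrite E in F. exact F. }
  assert (C : forall a, tern sigma c b a = tern sigma a b c).
  { intros a. transitivity (tern sigma c b (tern sigma b c (tern sigma a b c))).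
    - rewrite A; reflexivity.
    - apply P1. }
  split; [exact A|]. split; [|exact C].
  intros a. rewrite <- C. apply P1.
Qed.
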